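(* Let $R$ be a ring, $\mathcal{L}$ a class of left $R$-modules, $M$ an exact complex which is $\mathrm{Hom}_R(-,\mathcal{L})$-exact, and $N$ a bounded above complex. If for every $n\in\mathbb{Z}$ every morphism $Z_{n-1}(M)\to N_n$ factors through a module in $\mathcal{L}$, then every morphism of complexes $M\to N$ is null-homotopic via a homotopy $s$ each of whose components $s_n$ factors through a module of $\mathcal{L}$.
   Context: Complexes are homologically indexed, $Z_n(M)=\mathrm{Ker}\,d_n^M$. A complex $N$ is bounded above if there is $b$ with $N_n=0$ for all $n\ge b$. A complex $X$ is $\mathrm{Hom}_R(-,\mathcal{L})$-exact if the complex of abelian groups $\mathrm{Hom}_R(X,L)$ is exact for every $L\in\mathcal{L}$. *)

(* Defs.v *)
From HB Require Import structures.
From mathcomp Require Import all_boot all_order all_algebra.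
Set Implicit Arguments. Unset Strict Implicit. Unset Printing Implicit Defensive.
Import GRing.Theory.
Local Open Scope ring_scope.

Section Kernel.
Variables (R : pzRingType) (U V : lmodType R) (f : {linear U -> V}).
Definition kerp : {pred U} := fun x => f x == 0.
Lemma kerp_submod : submod_closed kerp.
Proof.
split; first by rewrite unfold_in /kerp /= raddf0.
by move=> a x y; rewrite !unfold_in /kerp /= linearP => /eqP-> /eqP->; rewrite scaler0 addr0.
Qed.
HB.instance Definition _ := GRing.isSubmodClosed.Build R U kerp kerp_submod.
Definition kerT := {x : U | x \in kerp}.
HB.instance Definition _ := [isSub of kerT for (@sval U (fun x => x \in kerp))].
HB.instance Definition _ := [Choice of kerT by <:].
HB.instance Definition _ := [SubChoice_isSubLmodule of kerT by <:].
End Kernel.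

(* Chain complexes of left R-modules, homologically indexed by int.
   To avoid dependent-type casts (n-1+1 is not convertible to n), the
   differential d_{n+1} : X_{n+1} -> X_n is stored as [dif X n]. *)
Record complex (R : pzRingType) := Complex {
  obj :> int -> lmodType R;
  dif : forall n : int, {linear obj (n + 1) -> obj n};
  dif_dif : forall (n : int) (x : obj (n + 1 + 1)), dif n (dif (n + 1) x) = 0
}.

Section Complexes.
Variable R : pzRingType.

Definition factors_through (L : lmodType R -> Prop) (A B : lmodType R)
  (h : {linear A -> B}) : Prop :=
  exists (X : lmodType R), L X /\
  exists (a : {linear A -> X}) (b : {linear X -> B}), forall x, h x = b (a x).

Definition exact_complex (M : complex R) : Prop :=
  forall (n : int) (x : M (n + 1)), dif M n x = 0 ->
    exists y : M (n + 1 + 1), dif M (n + 1) y = x.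

(* Exactness of Hom_R(M, L) at Hom_R(M_{n+1}, L), for every L in the class. *)
Definition Hom_exact (L : lmodType R -> Prop) (M : complex R) : Prop :=
  forall (X : lmodType R), L X ->
  forall (n : int) (f : {linear M (n + 1) -> X}),
    (forall y : M (n + 1 + 1), f (dif M (n + 1) y) = 0) ->
    exists g : {linear M n -> X}, forall x : M (n + 1), f x = g (dif M n x).

Definition bounded_above (N : complex R) : Prop :=
  exists b : int, forall n : int, (b <= n)%R -> forall x : N n, x = 0.

(* Z_{n+1}(M) = Ker (d_{n+1} : M_{n+1} -> M_n). *)
Definition Zc (M : complex R) (n : int) : lmodType R := kerT (dif M n).

Definition is_chain_map (M N : complex R) (f : forall n, {linear M n -> N n}) :=
  forall (n : int) (x : M (n + 1)), f n (dif M n x) = dif N n (f (n + 1) x).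

Definition is_homotopy (M N : complex R) (f : forall n, {linear M n -> N n})
  (s : forall n, {linear M n -> N (n + 1)}) :=
  forall (n : int) (x : M (n + 1)),
    f (n + 1) x = dif N (n + 1) (s (n + 1) x) + s n (dif M n x).
End Complexes.

(* Main.v *)
Require Import Defs.
From HB Require Import structures.
From mathcomp Require Import all_boot all_order all_algebra.
From Stdlib Require Import ClassicalEpsilon.
Local Open Scope ring_scope.
Import Order.TTheory GRing.Theory Num.Theory.
From mathcomp Require Import zify.
Set Implicit Arguments. Unset Strict Implicit.

Definition mkLin (R : pzRingType) (U V : lmodType R) (g : U -> V) (H : linear g) : {linear U -> V} :=
  HB.pack g (GRing.isLinear.Build R U V *:%R g H).
Arguments mkLin {R U V} g H.

Lemma lin0 (R : pzRingType) (U V : lmodType R) : linear (fun _ : U => (0 : V)).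
Proof. by move=> a x y; rewrite scaler0 addr0. Qed.

Section Main.
Variables (R : pzRingType) (L : lmodType R -> Prop) (M N : complex R).
Variable (f : forall n, {linear M n -> N n}).
Hypothesis exM : exact_complex M.
Hypothesis hexM : Hom_exact L M.
Hypothesis hfac : forall (n : int) (h : {linear Zc M n -> N (n + 1 + 1)}), factors_through L h.
Hypothesis chain : is_chain_map f.

Lemma step k (t : {linear M (k+1+1) -> N (k+1+1+1)}) :
  (forall y : M (k+1+1+1), dif N (k+1+1) (t (dif M (k+1+1) y)) = f (k+1+1) (dif M (k+1+1) y)) ->
  exists u : {linear M (k+1) -> N (k+1+1)}, factors_through L u /\
   (forall y : M (k+1+1), dif N (k+1) (u (dif M (k+1) y)) = f (k+1) (dif M (k+1) y)) /\
   (forall x : M (k+1+1), f (k+1+1) x = dif N (k+1+1) (t x) + u (dif M (k+1) x)).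
Proof.
move=> Ht.
pose g := fun x : M (k+1+1) => f (k+1+1) x - dif N (k+1+1) (t x).
have glin : linear g.
  move=> a x y; rewrite /g; set F := f _; set D := dif N _.
  by rewrite [F _]linearP [t _]linearP [D _]linearP scalerBr opprD addrACA.
pose G := mkLin g glin.
have gB : forall y : M (k+1+1+1), G (dif M (k+1+1) y) = 0.
  by move=> y; rewrite /= /g Ht subrr.
have gK : forall x1 x2, dif M (k+1) x1 = dif M (k+1) x2 -> G x1 = G x2.
  move=> x1 x2 e.
  have : dif M (k+1) (x1 - x2) = 0 by rewrite linearB e subrr.
  case/exM => y hy.
  by apply/eqP; rewrite -subr_eq0 -linearB -hy gB.
have preim : forall z : Zc M k, exists y, dif M (k+1) y = val z.
  move=> z; apply: exM; apply/eqP; exact: (valP z).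
pose pick := fun z : Zc M k => epsilon (inhabits 0) (fun y => dif M (k+1) y = val z).
have pickP : forall z, dif M (k+1) (pick z) = val z.
  by move=> z; apply: (epsilon_spec (inhabits 0) (fun y => dif M (k+1) y = val z)); apply: preim.
have hlin : linear (fun z => G (pick z)).
  move=> a z1 z2; rewrite -linearP; apply: gK.
  by rewrite linearP !pickP linearP.
have [X [LX [a [b hab]]]] := @hfac k (mkLin _ hlin).
have cpf : forall y : M (k+1+1), dif M (k+1) y \in kerp (dif M k).
  by move=> y; rewrite unfold_in /kerp /= dif_dif.
pose cores := fun y : M (k+1+1) => (Sub (dif M (k+1) y) (cpf y) : Zc M k).
have clin : linear cores.
  move=> c y1 y2; apply: val_inj; by rewrite [RHS]linearP /= linearP.
pose ap : {linear M (k+1+1) -> X} := a \o mkLin cores clin.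
have apB : forall y : M (k+1+1+1), ap (dif M (k+1+1) y) = 0.
  move=> y; rewrite /ap /=.
  have -> : cores (dif M (k+1+1) y) = 0 by apply: val_inj; rewrite /= dif_dif.
  by rewrite linear0.
have [c hc] := @hexM X LX (k+1) ap apB.
have equ : forall x : M (k+1+1), f (k+1+1) x = dif N (k+1+1) (t x) + (b \o c) (dif M (k+1) x).
  move=> x; rewrite /= -hc /ap /= -hab /=.
  have -> : g (pick (cores x)) = g x by apply: (gK (pick (cores x)) x); rewrite pickP.
  by rewrite /g (addrC (dif N _ _)) subrK.
exists (b \o c); split; first by exists X; split=> //; exists c, b.
split=> // y.
have e2 := equ y.
have e3 : b (c (dif M (k+1) y)) = f (k+1+1) y - dif N (k+1+1) (t y).
  by rewrite e2 (addrC (dif N _ _)) addrK.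
rewrite /= e3 linearB dif_dif subr0 chain //.
Qed.

Definition P n := {linear M n -> N (n+1)}.
Definition Inv n (t : P n) := forall y : M (n+1), dif N n (t (dif M n y)) = f n (dif M n y).
Definition Good n (t : P (n+1)) (u : P n) := factors_through L u /\ Inv u /\
  forall x : M (n+1), f (n+1) x = dif N (n+1) (t x) + u (dif M n x).

Lemma step' n (t : P (n+1)) : Inv t -> exists u : P n, Good t u.
Proof.
have [k e] : exists k, n = k + 1 by exists (n - 1); rewrite subrK.
subst n => Ht; exact: step.
Qed.

Definition zeroL n : P n := mkLin (fun _ => 0) (@lin0 _ _ _).
Definition stepf n (t : P (n+1)) : P n :=
  epsilon (inhabits (zeroL n)) (fun u => Inv t -> Good t u).

Lemma stepfP n (t : P (n+1)) : Inv t -> Good t (stepf t).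
Proof.
move=> Ht; apply: (epsilon_spec (inhabits (zeroL n)) (fun u => Inv t -> Good t u)) => //.
by have [u Hu] := step' Ht; exists u.
Qed.

Variable b : int.
Hypothesis hb : forall n : int, (b <= n)%R -> forall x : N n, x = 0.
Hypothesis LX0 : exists X, L X.

Fixpoint state (m : nat) : forall n, P n :=
  match m with
  | 0%N => zeroL
  | m'.+1 => fun n => if (b - m'%:Z <= n)%R then state m' n else stepf (state m' (n+1))
  end.

Lemma inv_state m : forall n, (b - m%:Z <= n)%R ->
  [/\ factors_through L (state m n), Inv (state m n) &
   forall x : M (n+1), f (n+1) x = dif N (n+1) (state m (n+1) x) + state m n (dif M n x)].
Proof.
elim: m => [|m IH] n hn.
  have bn : (b <= n)%R by move: hn; rewrite subr0.
  have bn1 : (b <= n + 1)%R by apply: le_trans bn _; rewrite lerDl.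
  split.
  - have [X LX] := LX0; exists X; split=> //.
    exists (mkLin (fun _ : M n => 0 : X) (@lin0 _ _ _)), (mkLin (fun _ : X => 0 : N (n+1)) (@lin0 _ _ _)) => x.
    exact: hb.
  - by move=> y; rewrite (hb bn (dif N n _)) (hb bn (f n _)).
  - by move=> x; rewrite (hb bn1 (f _ x)) (hb bn1 (_ + _)).
rewrite /=.
have hn1 : (b - m%:Z <= n + 1)%R by move: hn; lia.
rewrite hn1.
case: ifP => hc; first exact: IH.
have [_ Hi _] := IH _ hn1.
by have [? [? ?]] := stepfP Hi; split.
Qed.

Lemma stab k m n : (b - m%:Z <= n)%R -> state (k + m) n = state m n.
Proof.
move=> hn; elim: k => [|k IH] //=.
have -> : (b - (k + m)%N%:Z <= n)%R by move: hn; lia.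
exact: IH.
Qed.

Lemma sE m n : (b - m%:Z <= n)%R -> state m n = state `|b - n|%N n.
Proof.
move=> hn.
have h0 : (b - (`|b - n|%N)%:Z <= n)%R by lia.
case: (leqP m `|b - n|%N) => hm.
  by rewrite -(subnK hm) stab.
by rewrite -(subnK (ltnW hm)) stab.
Qed.


End Main.

Unset Implicit Arguments.

Theorem lemma2p1 (R : pzRingType) (L : lmodType R -> Prop) (M N : complex R) :
  exact_complex M -> Hom_exact L M -> bounded_above N ->
  (forall (n : int) (h : {linear Zc M n -> N (n + 1 + 1)}),
     factors_through L h) ->
  forall f : forall n, {linear M n -> N n}, is_chain_map f ->
  exists s : forall n, {linear M n -> N (n + 1)},
    is_homotopy f s /\ forall n, factors_through L (s n).
Proof.
move=> exM hexM [b hb] hfac f chain.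
have LX0 : exists X, L X.
  have [X [LX _]] := hfac 0 (mkLin (fun _ : Zc M 0 => 0 : N (0 + 1 + 1)) (@lin0 _ _ _)).
  by exists X.
pose st := @state R L M N f b.
exists (fun n => st `|b - n|%N n); split.
  move=> n x.
  pose m := (`|b - n|%N).+1.
  have h1 : (b - m%:Z <= n)%R by rewrite /m; lia.
  have h2 : (b - m%:Z <= n + 1)%R by rewrite /m; lia.
  have [_ _ E] := inv_state exM hexM hfac chain hb LX0 h1.
  by rewrite /st -(sE L f h1) -(sE L f h2).
move=> n.
have h0 : (b - (`|b - n|%N)%:Z <= n)%R by lia.
by have [] := inv_state exM hexM hfac chain hb LX0 h0.
Qed.
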